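(* Let $\varphi:\mathbb{R}^n\to(-\infty,\infty]$ be continuously prox-regular at $\bar x$ for $\bar v=0$ and satisfy $\varphi(x)\ge\varphi(\bar x)-\frac\rho2\|x-\bar x\|^2$ for all $x$ for some $\rho\ge0$, and let $\bar x$ be a tilt-stable local minimizer of $\varphi$ with modulus $\kappa>0$. Then for every sufficiently small $r>0$, $\bar x$ is a tilt-stable local minimizer of the Moreau envelope $e_r\varphi$ with modulus $\kappa+2r$.
   Context: Moreau envelope: $e_r\varphi(x)=\inf_w\{\varphi(w)+\frac1{2r}\|w-x\|^2\}$. Limiting subdifferential $\partial\varphi(\bar x)=\{v:(v,-1)\in N_{\operatorname{epi}\varphi}(\bar x,\varphi(\bar x))\}$, where $N_\Omega(\bar x)$ is the set of all limits of $v_k\in\widehat N_\Omega(x_k)$, $x_k\to\bar x$ in $\Omega$, and $\widehat N_\Omega(\bar x)=\{v:\limsup_{x\to\bar x,x\in\Omega}\langle v,x-\bar x\rangle/\|x-\bar x\|\le0\}$. Continuously prox-regular at $\bar x$ for $\bar v\in\partial\varphi(\bar x)$: $\varphi(\bar x)$ finite, $\varphi$ l.s.c. around $\bar x$, there are $\varepsilon>0,\rho'\ge0$ with $\varphi(x)\ge\varphi(u)+\langle v,x-u\rangle-\frac{\rho'}2\|x-u\|^2$ for all $x\in\mathbb B_\varepsilon(\bar x)$, $(u,v)\in\operatorname{gph}\partial\varphi\cap\mathbb B_\varepsilon(\bar x,\bar v)$, and $(x_k,v_k)\to(\bar x,\bar v)$ with $v_k\in\partial\varphi(x_k)$ implies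 $\varphi(x_k)\to\varphi(\bar x)$. $\bar x$ is a tilt-stable local minimizer of a function $\phi$ with modulus $\kappa$ if for some $\gamma>0$ the mapping $M_\gamma(v)=\operatorname{argmin}\{\phi(x)-\langle v,x\rangle:x\in\mathbb B_\gamma(\bar x)\}$ is single-valued and Lipschitz with constant $\kappa$ on a neighborhood of $0$, with $M_\gamma(0)=\{\bar x\}$. *)

(* Defs.v *)
From HB Require Import structures.
From mathcomp Require Import all_boot all_order all_algebra.
From mathcomp Require Import all_classical all_reals.
From mathcomp Require Import ereal topology.
Set Implicit Arguments. Unset Strict Implicit. Unset Printing Implicit Defensive.
Import Order.TTheory GRing.Theory Num.Theory.
Local Open Scope classical_set_scope.
Local Open Scope ring_scope.

Section Defs.
Variables (R : realType) (n : nat).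
Local Notation vec := 'rV[R]_n.

Definition dot (u v : vec) : R := \sum_(i < n) u ord0 i * v ord0 i.
Definition enorm (u : vec) : R := Num.sqrt (dot u u).

(* Euclidean inner product / norm on R^n x R (the space containing epigraphs) *)
Definition pdot (p q : vec * R) : R := dot p.1 q.1 + p.2 * q.2.
Definition pnorm (p : vec * R) : R := Num.sqrt (pdot p p).
Definition psub (p q : vec * R) : vec * R := (p.1 - q.1, p.2 - q.2).

Definition vconv (x : nat -> vec) (l : vec) : Prop :=
  forall e : R, 0 < e -> exists N : nat, forall k, (N <= k)%N -> enorm (x k - l) < e.
Definition pconv (x : nat -> vec * R) (l : vec * R) : Prop :=
  forall e : R, 0 < e -> exists N : nat, forall k, (N <= k)%N -> pnorm (psub (x k) l) < e.

(* Frechet (regular) normal cone: limsup_{x -> xb, x in Om} <v,x-xb>/|x-xb| <= 0 *)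
Definition reg_normal (Om : set (vec * R)) (xb : vec * R) (v : vec * R) : Prop :=
  forall e : R, 0 < e -> exists d : R, 0 < d /\
    forall x, Om x -> 0 < pnorm (psub x xb) < d ->
      pdot v (psub x xb) <= e * pnorm (psub x xb).

Definition lim_normal (Om : set (vec * R)) (xb : vec * R) (v : vec * R) : Prop :=
  Om xb /\
  exists (x vk : nat -> vec * R), (forall k, Om (x k)) /\ pconv x xb /\
    (forall k, reg_normal Om (x k) (vk k)) /\ pconv vk v.

Definition epi (phi : vec -> \bar R) : set (vec * R) :=
  [set p | (phi p.1 <= p.2%:E)%E].

Definition subdiff (phi : vec -> \bar R) (x : vec) (v : vec) : Prop :=
  phi x \is a fin_num /\ lim_normal (epi phi) (x, fine (phi x)) (v, -1).

Definition lsc_at (phi : vec -> \bar R) (x : vec) : Prop :=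
  forall a : R, (a%:E < phi x)%E ->
    exists d : R, 0 < d /\ forall y, enorm (y - x) < d -> (a%:E < phi y)%E.

Definition cont_prox_regular (phi : vec -> \bar R) (xb vb : vec) : Prop :=
  [/\ phi xb \is a fin_num,
      subdiff phi xb vb,
      (exists e : R, 0 < e /\ forall x, enorm (x - xb) < e -> lsc_at phi x),
      (exists e rho' : R, 0 < e /\ 0 <= rho' /\
         forall x u v, enorm (x - xb) <= e -> subdiff phi u v ->
           enorm (u - xb) ^+ 2 + enorm (v - vb) ^+ 2 <= e ^+ 2 ->
           (phi x >= phi u + (dot v (x - u) - rho' / 2 * enorm (x - u) ^+ 2)%:E)%E)
    & (forall (xk vk : nat -> vec), (forall k, subdiff phi (xk k) (vk k)) ->
         vconv xk xb -> vconv vk vb ->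
         (fun k => phi (xk k)) @ \oo --> phi xb)].

Definition tilt_argmin (phi : vec -> \bar R) (xb : vec) (g : R) (v : vec) : set vec :=
  [set x | enorm (x - xb) <= g /\
     forall y, enorm (y - xb) <= g ->
       (phi x - (dot v x)%:E <= phi y - (dot v y)%:E)%E].

Definition tilt_stable (phi : vec -> \bar R) (xb : vec) (kappa : R) : Prop :=
  exists g : R, 0 < g /\ exists d : R, 0 < d /\ exists m : vec -> vec,
    (forall v, enorm v < d -> tilt_argmin phi xb g v = [set m v]) /\
    (forall v1 v2, enorm v1 < d -> enorm v2 < d ->
        enorm (m v1 - m v2) <= kappa * enorm (v1 - v2)) /\
    tilt_argmin phi xb g 0 = [set xb].

Definition moreau (phi : vec -> \bar R) (r : R) (x : vec) : \bar R :=
  ereal_inf [set (phi w + ((2 * r)^-1 * enorm (w - x) ^+ 2)%:E)%E | w in [set: vec]].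

End Defs.

(* Main.v *)
Require Import Defs.
From HB Require Import structures.
From mathcomp Require Import all_boot all_order all_algebra.
From mathcomp Require Import all_classical all_reals.
From mathcomp Require Import ereal topology.
From mathcomp Require Import ring lra.
Import Order.TTheory GRing.Theory Num.Theory.
Set Implicit Arguments. Unset Strict Implicit.
Local Open Scope ring_scope.

Lemma dotC (R : realType) (n : nat) (u v : 'rV[R]_n) : dot u v = dot v u.
Proof. by rewrite /dot; apply: eq_bigr => i _; rewrite mulrC. Qed.

Lemma dotDl (R : realType) (n : nat) (u w v : 'rV[R]_n) :
  dot (u + w) v = dot u v + dot w v.
Proof. by rewrite /dot -big_split; apply: eq_bigr => i _; rewrite !mxE mulrDl. Qed.

Lemma dotZl (R : realType) (n : nat) (a : R) (u v : 'rV[R]_n) :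
  dot (a *: u) v = a * dot u v.
Proof. by rewrite /dot mulr_sumr; apply: eq_bigr => i _; rewrite !mxE mulrA. Qed.

Lemma dotNl (R : realType) (n : nat) (u v : 'rV[R]_n) : dot (- u) v = - dot u v.
Proof. by rewrite -scaleN1r dotZl mulN1r. Qed.

Lemma dotDr (R : realType) (n : nat) (u w v : 'rV[R]_n) :
  dot v (u + w) = dot v u + dot v w.
Proof. by rewrite dotC dotDl !(dotC v). Qed.

Lemma dotZr (R : realType) (n : nat) (a : R) (u v : 'rV[R]_n) :
  dot v (a *: u) = a * dot v u.
Proof. by rewrite dotC dotZl dotC. Qed.

Lemma dotNr (R : realType) (n : nat) (u v : 'rV[R]_n) : dot v (- u) = - dot v u.
Proof. by rewrite dotC dotNl dotC. Qed.

Lemma dot0l (R : realType) (n : nat) (v : 'rV[R]_n) : dot 0 v = 0.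
Proof. by rewrite /dot big1 // => i _; rewrite mxE mul0r. Qed.

Lemma dot0r (R : realType) (n : nat) (v : 'rV[R]_n) : dot v 0 = 0.
Proof. by rewrite dotC dot0l. Qed.

Lemma dot_ge0 (R : realType) (n : nat) (u : 'rV[R]_n) : 0 <= dot u u.
Proof. by rewrite /dot; apply: sumr_ge0 => i _; rewrite -expr2 sqr_ge0. Qed.

Lemma dot_eq0 (R : realType) (n : nat) (u v : 'rV[R]_n) : dot u u = 0 -> dot u v = 0.
Proof.
move=> h; have H := @psumr_eq0P R _ xpredT (fun i => u ord0 i ^+ 2) (fun i _ => sqr_ge0 _).
rewrite /dot big1 // => i _.
have : u ord0 i ^+ 2 = 0 by apply: H => //; rewrite -[RHS]h /dot; apply: eq_bigr => j _; exact: expr2.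
by move/eqP; rewrite sqrf_eq0 => /eqP ->; rewrite mul0r.
Qed.

Lemma enorm_ge0 (R : realType) (n : nat) (u : 'rV[R]_n) : 0 <= enorm u.
Proof. exact: sqrtr_ge0. Qed.

Lemma enorm_sq (R : realType) (n : nat) (u : 'rV[R]_n) : enorm u ^+ 2 = dot u u.
Proof. by rewrite /enorm sqr_sqrtr // dot_ge0. Qed.

Lemma CS (R : realType) (n : nat) (u v : 'rV[R]_n) : dot u v <= enorm u * enorm v.
Proof.
have [a0|] := eqVneq (enorm u) 0.
  have : dot u u = 0 by rewrite -enorm_sq a0 expr0n.
  by move/dot_eq0 => ->; rewrite a0 mul0r.
have [b0|bn0 an0] := eqVneq (enorm v) 0.
  have : dot v v = 0 by rewrite -enorm_sq b0 expr0n.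
  by move/(dot_eq0 u) => h _; rewrite dotC h b0 mulr0.
set a := enorm u; set b := enorm v.
have ha : 0 < a by rewrite lt_def an0 enorm_ge0.
have hb : 0 < b by rewrite lt_def bn0 enorm_ge0.
have h := dot_ge0 (b *: u - a *: v).
rewrite !(dotDl, dotDr, dotNl, dotNr, dotZl, dotZr) -!enorm_sq -/a -/b (dotC v u) in h.
have hab : 0 < a * b by rewrite mulr_gt0.
have : a * b * (dot u v) <= a * b * (a * b).
  by rewrite -subr_ge0; move: h; set t := dot u v; nra.
by rewrite ler_pM2l.
Qed.

Lemma CSabs (R : realType) (n : nat) (u v : 'rV[R]_n) : - (enorm u * enorm v) <= dot u v.
Proof.
have := CS u (- v); rewrite dotNr.
have -> : enorm (- v) = enorm v by rewrite /enorm dotNl dotNr opprK.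
by rewrite lerNl.
Qed.

Lemma enormN (R : realType) (n : nat) (u : 'rV[R]_n) : enorm (- u) = enorm u.
Proof. by rewrite /enorm dotNl dotNr opprK. Qed.

Lemma enormZ (R : realType) (n : nat) (a : R) (u : 'rV[R]_n) : enorm (a *: u) = `|a| * enorm u.
Proof. by rewrite /enorm dotZl dotZr mulrA -expr2 sqrtrM ?sqr_ge0 // sqrtr_sqr. Qed.

Lemma enorm0 (R : realType) (n : nat) : enorm (0 : 'rV[R]_n) = 0.
Proof. by rewrite /enorm dot0l sqrtr0. Qed.

Lemma sq_le (R : realType) (a b : R) : 0 <= a -> 0 <= b -> a ^+ 2 <= b ^+ 2 -> a <= b.
Proof. by move=> ha hb; rewrite ler_pXn2r // nnegrE. Qed.

Lemma enormD (R : realType) (n : nat) (u v : 'rV[R]_n) : enorm (u + v) <= enorm u + enorm v.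
Proof.
apply: sq_le; rewrite ?addr_ge0 ?enorm_ge0 //.
rewrite enorm_sq !(dotDl, dotDr) (dotC v u) -!enorm_sq.
have := CS u v; nra.
Qed.

Lemma enormB (R : realType) (n : nat) (u v : 'rV[R]_n) : enorm (u - v) <= enorm u + enorm v.
Proof. by rewrite -(enormN v); apply: enormD. Qed.

Lemma le_of_eq (R : realType) (a b : R) : a = b -> a <= b.
Proof. by move->. Qed.

Lemma moreau_lb (R : realType) (n : nat) (phi : 'rV[R]_n -> \bar R) (r c : R)
  (x v : 'rV[R]_n) : 0 < r ->
  (forall w, ((c + dot v w - (2 * r)^-1 * enorm (x - r *: v - w) ^+ 2)%:E <= phi w)%E) ->
  ((c - r / 2 * dot v v)%:E <= moreau phi r x - (dot v x)%:E)%E.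
Proof.
move=> r0 H; rewrite leeBrDr //; apply/ereal_infP => _ [w _ <-].
move: (H w); case: (phi w) => [p| |] //=; last by move=> _; rewrite leey.
rewrite -!EFinD !lee_fin => h; rewrite -lerBlDr; apply: le_trans h.
rewrite !enorm_sq !(dotDl, dotDr, dotNl, dotNr, dotZl, dotZr).
rewrite (dotC x v) (dotC w v) (dotC w x).
have rn : r != 0 by rewrite gt_eqF.
apply: le_of_eq; field; rewrite ?rn //.
Qed.

Lemma moreau_ub (R : realType) (n : nat) (phi : 'rV[R]_n -> \bar R) (r pm : R)
  (mv v : 'rV[R]_n) : 0 < r -> phi mv = pm%:E ->
  (moreau phi r (mv + r *: v) - (dot v (mv + r *: v))%:E <=
     (pm - dot v mv - r / 2 * dot v v)%:E)%E.
Proof.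
move=> r0 hp; rewrite leeBlDr //.
apply: le_trans; first by apply: ereal_inf_lbound; exists mv.
rewrite hp -!EFinD lee_fin.
rewrite !enorm_sq !(dotDl, dotDr, dotNl, dotNr, dotZl, dotZr).
have rn : r != 0 by rewrite gt_eqF.
apply: le_of_eq; field; rewrite ?rn //.
Qed.
Lemma outer_real (R : realType) (r rho gam s e nv fb c p dw dxb : R) :
  0 < r -> 0 <= rho -> 8 * rho * r <= 1 -> 0 < gam -> gam < s -> s / 2 <= e ->
  r * nv <= gam / 32 -> 0 <= nv -> dw <= dxb + nv * s -> c <= fb - dxb ->
  fb - rho / 2 * s ^+ 2 <= p ->
  c + gam ^+ 2 / (32 * r) + dw - (2 * r)^-1 * e ^+ 2 <= p.
Proof.
move=> r0 rho0 h8 g0 gs se rnv nv0 hdw hc hp.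
have s0 : 0 < s by apply: lt_trans gs.
have h1 : gam ^+ 2 <= s ^+ 2 by rewrite ler_pXn2r ?nnegrE ?ltW.
have h2 : (r * nv) * s <= gam / 32 * s by rewrite ler_pM2r.
have h3 : gam / 32 * s <= s ^+ 2 / 32 by rewrite expr2; nra.
have h4 : (8 * rho * r) * s ^+ 2 <= s ^+ 2 by rewrite ler_piMl // sqr_ge0.
have h5 : s ^+ 2 / 4 <= e ^+ 2.
  have hs2 : 0 <= s / 2 by rewrite divr_ge0 // ltW.
  rewrite !expr2; nra.
have key : gam ^+ 2 / (32 * r) + nv * s + rho / 2 * s ^+ 2 <= (2 * r)^-1 * e ^+ 2.
  rewrite ler_pdivlMl ?mulr_gt0 //.
  have -> : 2 * r * (gam ^+ 2 / (32 * r) + nv * s + rho / 2 * s ^+ 2) =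
     gam ^+ 2 / 16 + 2 * ((r * nv) * s) + (8 * rho * r) * s ^+ 2 / 8.
    by field; rewrite gt_eqF.
  lra.
lra.
Qed.

Lemma key (R : realType) (n : nat) (phi : 'rV[R]_n -> \bar R) (xb : 'rV[R]_n)
  (rho r el gam g' : R) (v mv : 'rV[R]_n) :
  (forall x, phi x != -oo%E) ->
  phi xb \is a fin_num ->
  (forall x, (phi x >= phi xb - (rho / 2 * enorm (x - xb) ^+ 2)%:E)%E) ->
  (forall x, enorm (x - xb) < el -> lsc_at phi x) ->
  0 < gam -> 0 < r -> 0 <= rho -> 8 * rho * r <= 1 ->
  tilt_argmin phi xb gam v = [set mv]%classic ->
  (forall x, enorm (x - xb) <= g' ->
     enorm (x - r *: v - xb) < el /\ enorm (x - r *: v - xb) <= gam / 2) ->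
  r * enorm v <= gam / 32 ->
  enorm (mv + r *: v - xb) <= g' ->
  tilt_argmin (moreau phi r) xb g' v = [set mv + r *: v]%classic.
Proof.
move=> Hninf Hfin Hlow Hlsc g0 r0 rho0 h8 Harg Hy hrv Hxs.
have [hmvb hmvmin] : tilt_argmin phi xb gam v mv by rewrite Harg.
set fb := fine (phi xb).
have Efb : phi xb = fb%:E by rewrite fineK.
have hxb0 : enorm (xb - xb) <= gam by rewrite subrr enorm0 ltW.
have hmvxb := hmvmin xb hxb0.
have [pm Epm] : exists pm, phi mv = pm%:E.
  move: hmvxb (Hninf mv); rewrite Efb; case: (phi mv) => [p| |] //; first by eauto.
set c := pm - dot v mv.
have hc : c <= fb - dot v xb.
  by move: hmvxb; rewrite Efb Epm -!EFinB lee_fin.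
have Hcw : forall w, enorm (w - xb) <= gam -> ((c + dot v w)%:E <= phi w)%E.
  move=> w hw; move: (hmvmin w hw) (Hninf w); rewrite Epm.
  case: (phi w) => [p h _| h _| h _] //=; last by rewrite leey.
  by move: h; rewrite -!EFinB !lee_fin /c; lra.
pose Q x mu w := ((c + mu + dot v w - (2 * r)^-1 * enorm (x - r *: v - w) ^+ 2)%:E <= phi w)%E.
have Qmono : forall x mu mu' w, mu' <= mu -> Q x mu w -> Q x mu' w.
  move=> x mu mu' w h; rewrite /Q; apply: le_trans; rewrite lee_fin; lra.
have Qlb : forall x mu, (forall w, Q x mu w) ->
    ((c + mu - r / 2 * dot v v)%:E <= moreau phi r x - (dot v x)%:E)%E.
  move=> x mu H; apply: moreau_lb => // w; exact: H w.
have q0 : forall x w, 0 <= (2 * r)^-1 * enorm (x - r *: v - w) ^+ 2.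
  by move=> x w; rewrite mulr_ge0 ?sqr_ge0 // invr_ge0 mulr_ge0 // ltW.
have Hout : forall x w, enorm (x - xb) <= g' -> gam < enorm (w - xb) ->
    Q x (gam ^+ 2 / (32 * r)) w.
  move=> x w hx hw; have [_ hy] := Hy x hx.
  move: (Hlow w) (Hninf w); rewrite Efb /Q.
  case: (phi w) => [p hp _| _ _| //]; last by rewrite leey.
  move: hp; rewrite -EFinB !lee_fin => hp.
  apply: (outer_real (rho:=rho) (s:=enorm (w - xb)) (nv:=enorm v) (fb:=fb)
     (dxb := dot v xb)) => //.
  - have := enormD (w - (x - r *: v)) (x - r *: v - xb).
    have -> : w - (x - r *: v) + (x - r *: v - xb) = w - xb.
      by rewrite addrA subrK.
    rewrite -(enormN (x - r *: v - w)) (opprB (x - r *: v) w). lra.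
  - exact: enorm_ge0.
  - have -> : dot v w = dot v (w - xb) + dot v xb by rewrite -dotDr subrK.
    have := CS v (w - xb); lra.
have Hin0 : forall x w, enorm (x - xb) <= g' -> Q x 0 w.
  move=> x w hx; have [hwb|hwb] := leP (enorm (w - xb)) gam.
  - move: (Hcw w hwb); rewrite /Q; apply: le_trans; rewrite lee_fin.
    have := q0 x w; lra.
  - apply: (Qmono _ (gam ^+ 2 / (32 * r))); last exact: Hout.
    by rewrite divr_ge0 ?sqr_ge0 // ltW // mulr_gt0.
have Hstrict : forall x, enorm (x - xb) <= g' -> x != mv + r *: v ->
    exists mu, 0 < mu /\ forall w, Q x mu w.
  move=> x hx hne; have [hyel hyg] := Hy x hx.
  have hyne : x - r *: v != mv.
    by apply: contra hne => /eqP <-; rewrite subrK.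
  have hgt : ((c + dot v (x - r *: v)%R)%:E < phi (x - r *: v)%R)%E.
    rewrite ltNge; apply/negP => hle; move/negP: hyne; apply; apply/eqP.
    have : tilt_argmin phi xb gam v (x - r *: v).
      split; first lra.
      move=> z hz; move: hle (Hninf (x - r *: v)) (Hcw z hz).
      case: (phi (x - r *: v)) => [p| |] // hle _.
      case: (phi z) => [q| |] // hq.
        by rewrite -!EFinB lee_fin; move: hle hq; rewrite !lee_fin; lra.
      by rewrite /= leey.
    by rewrite Harg.
  have [eta [eta0 heta]] : exists eta, 0 < eta /\
      ((c + dot v (x - r *: v)%R + eta)%:E < phi (x - r *: v)%R)%E.
    move: hgt (Hninf (x - r *: v)); case: (phi (x - r *: v)) => [p| |] // hp _.
      exists ((p - (c + dot v (x - r *: v))) / 2); rewrite lte_fin in hp.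
      by split; [rewrite divr_gt0 // subr_gt0 | rewrite lte_fin; lra].
    by exists 1; split => //; rewrite ltey.
  have [del [del0 hdel]] := Hlsc _ hyel _ heta.
  have nv1 : 0 < enorm v + 1 by have := enorm_ge0 v; lra.
  set k := eta / (2 * (enorm v + 1)).
  have k0 : 0 < k by rewrite divr_gt0 // mulr_gt0.
  have hk : k * (2 * (enorm v + 1)) = eta by rewrite /k mulfVK // gt_eqF // mulr_gt0.
  set del2 := Order.min del k.
  have del20 : 0 < del2 by rewrite lt_min del0 k0.
  have del2d : del2 <= del by rewrite ge_min lexx.
  have del2k : del2 <= k by rewrite ge_min lexx orbT.
  have m1 : 0 < del2 ^+ 2 / (2 * r) by rewrite divr_gt0 ?exprn_gt0 ?mulr_gt0.
  have m2 : 0 < gam ^+ 2 / (32 * r) by rewrite divr_gt0 ?exprn_gt0 ?mulr_gt0.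
  exists (Order.min (eta / 2) (Order.min (del2 ^+ 2 / (2 * r)) (gam ^+ 2 / (32 * r)))).
  split; first by rewrite !lt_min m1 m2 divr_gt0.
  move=> w.
  have [hwy|hwy] := ltP (enorm (w - (x - r *: v))) del2.
  - apply: (Qmono _ (eta / 2)); first by rewrite ge_min lexx.
    have := hdel w (lt_le_trans hwy del2d).
    rewrite /Q => /ltW; apply: le_trans; rewrite lee_fin.
    have := q0 x w.
    have -> : dot v w = dot v (w - (x - r *: v)) + dot v (x - r *: v)
      by rewrite -dotDr subrK.
    have := CS v (w - (x - r *: v)).
    have : enorm v * enorm (w - (x - r *: v)) <= enorm v * k.
      by rewrite ler_wpM2l ?enorm_ge0 // ltW // (lt_le_trans hwy).
    have := enorm_ge0 v.
    nra.
  - have [hwb|hwb] := leP (enorm (w - xb)) gam.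
    + apply: (Qmono _ (del2 ^+ 2 / (2 * r))); first by rewrite !ge_min lexx orbT.
      move: (Hcw w hwb); rewrite /Q; apply: le_trans; rewrite lee_fin.
      have he : del2 <= enorm (x - r *: v - w).
        by rewrite -enormN (opprB (x - r *: v) w).
      have he2 : del2 ^+ 2 <= enorm (x - r *: v - w) ^+ 2.
        by rewrite ler_pXn2r ?nnegrE ?enorm_ge0 // ltW.
      have ir : 0 <= (2 * r)^-1 by rewrite invr_ge0 mulr_ge0 // ltW.
      have : del2 ^+ 2 / (2 * r) <= (2 * r)^-1 * enorm (x - r *: v - w) ^+ 2.
        by rewrite mulrC; apply: ler_wpM2l.
      lra.
    + apply: (Qmono _ (gam ^+ 2 / (32 * r))); first by rewrite !ge_min lexx !orbT.
      exact: Hout.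
have Hub := moreau_ub v r0 Epm.
rewrite -/c in Hub.
apply/seteqP; split => x /=.
- move=> [hx hmin].
  case: (eqVneq x (mv + r *: v)) => // hne; exfalso.
  have [mu [mu0 HQ]] := Hstrict x hx hne.
  have h1 := Qlb x mu HQ.
  have h2 := hmin (mv + r *: v) Hxs.
  have := le_trans h1 (le_trans h2 Hub).
  rewrite lee_fin; lra.
- move=> ->; split => // z hz.
  apply: le_trans Hub _.
  have := Qlb z 0 (fun w => Hin0 z w hz).
  by rewrite addr0.
Qed.

Unset Implicit Arguments.
Theorem mainTheorem11 (R : realType) (n : nat) (phi : 'rV[R]_n -> \bar R)
    (xb : 'rV[R]_n) (rho kappa : R) :
  (forall x, phi x != -oo%E) ->
  cont_prox_regular phi xb 0 ->
  0 <= rho ->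
  (forall x, (phi x >= phi xb - (rho / 2 * enorm (x - xb) ^+ 2)%:E)%E) ->
  0 < kappa ->
  tilt_stable phi xb kappa ->
  exists r0 : R, 0 < r0 /\
    forall r : R, 0 < r -> r < r0 -> tilt_stable (moreau phi r) xb (kappa + 2 * r).
Proof.
move=> Hninf [Hfin _ [el [el0 Hlsc]] _ _] rho0 Hlow k0
  [gam [g0 [d [d0 [m [Harg [Hlip Harg0]]]]]]].
have h81 : 0 < 8 * rho + 1 by lra.
exists (1 / (8 * rho + 1)); split; first by rewrite divr_gt0.
move=> r r0 rr0.
have h8 : 8 * rho * r <= 1.
  move: rr0; rewrite ltr_pdivlMr // => h; nra.
have hm0 : m 0 = xb.
  have := Harg 0; rewrite enorm0 => /(_ d0); rewrite Harg0 => E.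
  have : [set xb]%classic xb by [].
  by rewrite E => ->.
set g' := Order.min gam el / 4.
have g'0 : 0 < g' by rewrite divr_gt0 // lt_min g0 el0.
have g'g : g' <= gam / 4 by rewrite ler_pM2r // ge_min lexx.
have g'e : g' <= el / 4 by rewrite ler_pM2r // ge_min lexx orbT.
have kr : 0 < kappa + 9 * r by lra.
set d' := Order.min d (g' / (kappa + 9 * r)).
have d'0 : 0 < d' by rewrite lt_min d0 divr_gt0.
have hvd : forall v : 'rV[R]_n, enorm v < d' -> enorm v < d.
  by move=> v hv; apply: lt_le_trans hv _; rewrite ge_min lexx.
have hvg : forall v : 'rV[R]_n, enorm v < d' -> (kappa + 9 * r) * enorm v <= g'.
  move=> v hv; rewrite -ler_pdivlMl // mulrC.
  apply: ltW; apply: lt_le_trans hv _; rewrite ge_min lexx orbT //.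
have Hkey : forall v : 'rV[R]_n, enorm v < d' ->
    tilt_argmin (moreau phi r) xb g' v = [set m v + r *: v]%classic.
  move=> v hv; have hg := hvg v hv; have nv0 := enorm_ge0 v.
  have hrv : enorm (r *: v) = r * enorm v by rewrite enormZ ger0_norm // ltW.
  apply: (key (rho := rho) (el := el) (gam := gam)) => //.
  - by apply: Harg; apply: hvd.
  - move=> x hx.
    have := enormB (x - xb) (r *: v).
    have -> : x - xb - r *: v = x - r *: v - xb by rewrite addrAC.
    rewrite hrv => h; split; nra.
  - nra.
  - have := enormD (m v - xb) (r *: v).
    have -> : m v - xb + r *: v = m v + r *: v - xb by rewrite addrAC.
    have e0 : enorm (0 : 'rV[R]_n) < d by rewrite enorm0.
    have := Hlip v 0 (hvd _ hv) e0; rewrite hm0 subr0 => hl.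
    have : enorm (m v - xb) <= kappa * enorm v by apply: hl; rewrite enorm0.
    rewrite hrv; nra.
exists g'; split => //; exists d'; split => //; exists (fun v => m v + r *: v).
split; [exact: Hkey | split].
- move=> v1 v2 h1 h2 /=.
  have -> : m v1 + r *: v1 - (m v2 + r *: v2) = (m v1 - m v2) + r *: (v1 - v2).
    by rewrite scalerBr opprD addrACA.
  have := enormD (m v1 - m v2) (r *: (v1 - v2)).
  rewrite enormZ (ger0_norm (ltW r0)).
  have := Hlip v1 v2 (hvd _ h1) (hvd _ h2).
  have := mulr_ge0 (ltW r0) (enorm_ge0 (v1 - v2)).
  lra.
- have e0 : enorm (0 : 'rV[R]_n) < d' by rewrite enorm0.
  by have := Hkey 0 e0; rewrite scaler0 addr0 hm0.
Qed.
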